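(* In the content-oblivious BFS algorithm $\mathcal{A}$ run with root $r$ on a connected graph $G$, for every $k\ge1$ such that the root performs at least $k$ invocations of Explore, the following hold at the end of the root's $k$-th invocation of Explore, regardless of message delays, delivery order and contents: - every node at distance exactly $k$ from $r$ has set its parent to a neighbour at distance $k-1$ from $r$, and has left state $\mathsf{INIT}$; - every node at distance greater than $k$ from $r$ is still in state $\mathsf{INIT}$.
   Context: Asynchronous model: there are no timing assumptions, and messages are not necessarily delivered in FIFO order. A node is asleep until it receives a message. On receiving one, it performs local computation, sends zero or more messages to neighbours, and goes back to sleep. Each node knows $n$ and its neighbour set $\mathcal{N}_u$. Algorithm $\mathcal{A}$ (content-oblivious BFS). Nodes ignore the contents of all messages; decisions depend only on from which neighbour a message arrives. Every node $u$ has variables $\mathrm{state}_u\in\{\mathsf{INIT},\mathsf{IDLE},\mathsf{EXPLORE},\mathsf{DONE}\}$, $\mathrm{parent}_u$, $\mathrm{children}_u$ and $\mathrm{count}_u$. All nodes start in $\mathsf{INIT}$. The root $r$ sets $\mathrm{parent}_r=\bot$, $\mathrm{children}_r=\mathcal{N}_r$, $\mathrm{count}_r=0$ and $\mathrm{state}_r=\mathsf{IDLE}$. It then repeatedly invokes Explore until $\mathrm{state}_r=\mathsf{DONE}$. The nodes handle incoming messages as follows. (i) SetParent: a node $u$ in $\mathsf{INIT}$ that receives a message from $v$ sets $\mathrm{parent}_u=v$, $\mathrm{children}_u=\mathcal{N}_u\setminus\{v\}$, $\mathrm{count}_u=0$ and $\mathrm{state}_u=\mathsf{IDLE}$, and sends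 a message to $v$. (ii) MarkSibling: a node $u$ in $\mathsf{IDLE}$ or $\mathsf{DONE}$ that receives a message from some $v\neq\mathrm{parent}_u$ removes $v$ from $\mathrm{children}_u$ and sends a message to $v$. (iii) Explore: a node $u$ in $\mathsf{IDLE}$ that receives a message from $\mathrm{parent}_u$ (or the root, when it invokes Explore) proceeds as follows. - It sets $\mathrm{state}_u=\mathsf{EXPLORE}$ and increments $\mathrm{count}_u$. - Sequentially, for each $v\in\mathcal{N}_u\setminus\{\mathrm{parent}_u\}$, it sends a message to $v$ and waits until it receives a message from $v$. - If $\mathrm{count}_u=n-1$, it performs an extra ''dummy'' exploration: sequentially, for each $v\in\mathrm{children}_u$, it sends a message to $v$ and waits for a message from $v$. - It then sends a message to $\mathrm{parent}_u$; the root skips this step. - Finally it sets $\mathrm{state}_u=\mathsf{DONE}$ if $\mathrm{count}_u=n-1$, and $\mathrm{state}_u=\mathsf{IDLE}$ otherwise. *)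

(* Defs.v *)
From HB Require Import structures.
From mathcomp Require Import all_boot.
Set Implicit Arguments. Unset Strict Implicit. Unset Printing Implicit Defensive.

Inductive status := INIT | IDLE | EXPLORE | DONE.

(* which loop of Explore a node is currently executing *)
Inductive phase := MainLoop | DummyLoop.

Section Algo.
Variables (V : finType) (e : rel V) (r : V).

Definition nbrs (u : V) : {set V} := [set v | e u v].

(* the number of nodes n, known to every node *)
Definition nnodes : nat := #|V|.

(* local state of a node.  st, par (None = bottom), chl, cnt are the paper's
   variables; ph / todo / wait encode the program counter of the sequential
   Explore procedure: the loop being executed, the neighbours of that loop not
   yet contacted, and the neighbour whose answer is being awaited. *)
Record local := Local {
  st : status; par : option V; chl : {set V}; cnt : nat;
  ph : phase; todo : {set V}; wait : option V }.

(* global configuration: local states and the in-flight messages; since the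
   algorithm ignores contents, a message is identified by its sender and
   receiver, and chan a b is the number of messages in transit from a to b
   (no FIFO order). *)
Record config := Config { loc : V -> local; chan : V -> V -> nat }.

Definition init_local : local := Local INIT None set0 0 MainLoop set0 None.
Definition init_config : config := Config (fun _ => init_local) (fun _ _ => 0).

Definition parset (o : option V) : {set V} := if o is Some p then [set p] else set0.

(* Continue an Explore in progress that is not currently waiting:
   proceed l l' s  -- the node goes from local state l to l' and sends a
   message to s (if s = Some w) or nothing (s = None).  The order in which
   neighbours are visited is arbitrary (nondeterministic). *)
Inductive proceed : local -> local -> option V -> Prop :=
| pr_send l w : st l = EXPLORE -> wait l = None -> w \in todo l ->
    proceed l (Local EXPLORE (par l) (chl l) (cnt l) (ph l) (todo l :\ w) (Some w))
            (Some w)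
| pr_dummy l l' s : st l = EXPLORE -> wait l = None -> ph l = MainLoop ->
    todo l = set0 -> cnt l = nnodes - 1 ->
    proceed (Local EXPLORE (par l) (chl l) (cnt l) DummyLoop (chl l) None) l' s ->
    proceed l l' s
| pr_finish l : st l = EXPLORE -> wait l = None -> todo l = set0 ->
    (ph l = DummyLoop \/ cnt l <> nnodes - 1) ->
    proceed l (Local (if cnt l == nnodes - 1 then DONE else IDLE)
                     (par l) (chl l) (cnt l) (ph l) set0 None)
            (par l).  (* send to parent; the root (par = None) skips it *)

Definition start_explore (u : V) (l : local) : local :=
  Local EXPLORE (par l) (chl l) (cnt l).+1 MainLoop (nbrs u :\: parset (par l)) None.

(* node u, in local state l, receives a message from v *)
Inductive handle (u v : V) : local -> local -> option V -> Prop :=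
| h_setparent l : st l = INIT ->
    handle u v l (Local IDLE (Some v) (nbrs u :\ v) 0 (ph l) (todo l) (wait l)) (Some v)
| h_marksibling l : (st l = IDLE \/ st l = DONE) -> par l <> Some v ->
    handle u v l (Local (st l) (par l) (chl l :\ v) (cnt l) (ph l) (todo l) (wait l))
           (Some v)
| h_explore l l' s : st l = IDLE -> par l = Some v ->
    proceed (start_explore u l) l' s -> handle u v l l' s
| h_reply l l' s : st l = EXPLORE -> wait l = Some v ->
    proceed (Local EXPLORE (par l) (chl l) (cnt l) (ph l) (todo l) None) l' s ->
    handle u v l l' s
(* situations not covered by the algorithm: the message is consumed and
   ignored (these never occur in actual executions) *)
| h_ignore l : (st l = DONE /\ par l = Some v) \/ (st l = EXPLORE /\ wait l <> Some v) ->
    handle u v l l None.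

Definition upd_loc (f : V -> local) (u : V) (l : local) : V -> local :=
  fun x => if x == u then l else f x.

Definition send (ch : V -> V -> nat) (u : V) (s : option V) : V -> V -> nat :=
  if s is Some w then fun a b => if (a == u) && (b == w) then (ch a b).+1 else ch a b
  else ch.

Definition consume (ch : V -> V -> nat) (v u : V) : V -> V -> nat :=
  fun a b => if (a == v) && (b == u) then (ch a b).-1 else ch a b.

Definition root_init : local := Local IDLE None (nbrs r) 0 MainLoop set0 None.

Inductive step : config -> config -> Prop :=
| step_root_init c : st (loc c r) = INIT ->
    step c (Config (upd_loc (loc c) r root_init) (chan c))
| step_root_explore c l' s : st (loc c r) = IDLE ->
    proceed (start_explore r (loc c r)) l' s ->
    step c (Config (upd_loc (loc c) r l') (send (chan c) r s))
| step_deliver c v u l' s : 0 < chan c v u -> handle u v (loc c u) l' s ->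
    step c (Config (upd_loc (loc c) u l') (send (consume (chan c) v u) u s)).

Inductive reachable : config -> Prop :=
| reach_init : reachable init_config
| reach_step c c' : reachable c -> step c c' -> reachable c'.

(* the root has completed exactly k invocations of Explore and is not inside one *)
Definition root_finished (c : config) (k : nat) : Prop :=
  (st (loc c r) = IDLE \/ st (loc c r) = DONE) /\ cnt (loc c r) = k.

Definition walk_len (u v : V) (k : nat) : Prop :=
  exists p : seq V, [/\ path e u p, last u p = v & size p = k].
Definition dist_is (u v : V) (k : nat) : Prop :=
  walk_len u v k /\ forall j, walk_len u v j -> k <= j.

End Algo.

(* Main.v *)
Require Import Defs.
From HB Require Import structures.
From mathcomp Require Import all_boot zify.
From Stdlib Require Import Lia.
Set Implicit Arguments. Unset Strict Implicit. Unset Printing Implicit Defensive.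

Section Graph.
Variables (V : finType) (e : rel V) (r : V).
Hypotheses (e_sym : symmetric e) (e_irr : irreflexive e)
  (e_conn : forall u v : V, connect e u v).

Fixpoint reach (j : nat) : {set V} :=
  if j is j'.+1 then [set v | [exists u in reach j', e u v]] else [set r].

Lemma walk_reach j v : walk_len e r v j <-> v \in reach j.
Proof.
elim: j v => [|j IH] v /=.
  split.
    by case=> p [_ <-]; case: p => // _; rewrite in_set1.
  by rewrite in_set1 => /eqP ->; exists [::].
split.
  case=> p [pp lp sp]; case/lastP: p pp lp sp => [//|q x].
  rewrite rcons_path last_rcons size_rcons => /andP[pq ex] <- [sq].
  rewrite in_set; apply/existsP; exists (last r q); rewrite ex andbT.
  by apply/IH; exists q.
rewrite in_set => /existsP[u /andP[/IH[q [pq lq sq]] euv]].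
exists (rcons q v); rewrite rcons_path last_rcons size_rcons pq lq euv sq.
by split.
Qed.

Lemma reach_ex v : exists j, v \in reach j.
Proof.
have /connectP[p pp lp] := e_conn r v.
by exists (size p); apply/walk_reach; exists p.
Qed.

Definition d (v : V) : nat := ex_minn (reach_ex v).

Lemma d_reach v : v \in reach (d v).
Proof. by rewrite /d; case: ex_minnP. Qed.

Lemma d_min v j : v \in reach j -> d v <= j.
Proof. by rewrite /d; case: ex_minnP => m _ H /H. Qed.

Lemma dist_d v j : dist_is e r v j <-> d v = j.
Proof.
split.
  case=> /walk_reach H1 H2; apply/eqP; rewrite eqn_leq d_min //=.
  by apply: H2; apply/walk_reach; apply: d_reach.
move=> E; rewrite -E; split; first by apply/walk_reach; apply: d_reach.
by move=> i /walk_reach /d_min.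
Qed.

Lemma d_edge u v : e u v -> d v <= (d u).+1.
Proof.
move=> euv; apply: d_min => /=; rewrite in_set; apply/existsP; exists u.
by rewrite d_reach.
Qed.

Lemma d_edge' u v : e u v -> d u <= (d v).+1.
Proof. by rewrite e_sym; apply: d_edge. Qed.

Lemma d_r : d r = 0.
Proof. by apply/eqP; rewrite -leqn0 d_min //= in_set1. Qed.

Lemma d_eq0 v : d v = 0 -> v = r.
Proof. by move=> H; have := d_reach v; rewrite H /= in_set1 => /eqP. Qed.

Lemma d_pred v : v != r -> exists p, e p v /\ (d p).+1 = d v.
Proof.
move=> vr; have := d_reach v; case E: (d v) => [|j].
  by move: vr; rewrite (d_eq0 E) eqxx.
rewrite /= in_set => /existsP[p /andP[pj epv]]; exists p; split=> //.
apply/eqP; rewrite eqn_leq ltnS d_min //= -E d_edge //.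
Qed.

Lemma d_bound v : d v < #|V|.
Proof.
have /walk_reach[p [pp lp sp]] := d_reach v.
move: lp; case: (shortenP pp) => p' pp' up' _ lp'.
have : d v <= size p' by apply: d_min; apply/walk_reach; exists p'.
move=> H; apply: (leq_ltn_trans H).
have := card_uniqP up'; rewrite /= => <-.
exact: max_card.
Qed.

Lemma d_pos v : v != r -> 0 < d v.
Proof. by move=> vr; rewrite lt0n; apply/eqP => /d_eq0 /eqP; rewrite (negPf vr). Qed.

Lemma one_node v : #|V| = 1 -> v = r.
Proof.
move=> H; apply/eqP; apply/negPn/negP => vr.
by have := d_bound v; rewrite H ltnS leqn0 => /eqP /d_eq0 /eqP; rewrite (negPf vr).
Qed.

Lemma nbrs_r_empty v : nbrs e r = set0 -> v = r.
Proof.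
move=> H; apply/eqP; apply/negPn/negP => vr.
have [m Hm] : exists m, d v <= m by exists (d v).
elim: m v vr Hm => [|m IH] v vr Hm.
  by move: Hm; rewrite leqn0 => /eqP /d_eq0 /eqP; rewrite (negPf vr).
have [p [epv dp]] := d_pred vr.
case: (eqVneq p r) => [pr|pr].
  move: epv; rewrite pr => erv; have : v \in nbrs e r by rewrite in_set.
  by rewrite H in_set0.
by apply: (IH p pr); rewrite -ltnS dp.
Qed.


Local Notation n := (nnodes V).
Local Notation L c := (loc c).

Definition isset (c : config V) v := st (loc c v) <> INIT.
Definition parok (c : config V) v :=
  exists p, [/\ par (loc c v) = Some p, e v p, (d p).+1 = d v & isset c p].
Definition fresh K (c : config V) v := cnt (loc c v) + d v + 1 = K.
Definition done K (c : config V) v := cnt (loc c v) + d v = K.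

Definition R0 (c : config V) :=
  (forall v, st (loc c v) = INIT) /\ (forall a b, chan c a b = 0).

Definition R1 (c : config V) :=
  [/\ st (loc c r) = IDLE, par (loc c r) = None,
      (cnt (loc c r) < n - 1 \/ n = 1), (forall a b, chan c a b = 0) &
      (forall v, isset c v <-> d v <= cnt (loc c r)) /\
      (forall v, v != r -> isset c v ->
        [/\ parok c v, st (loc c v) = IDLE & done (cnt (loc c r)) c v])].

Definition R3 (c : config V) :=
  [/\ cnt (loc c r) = n - 1,
      (st (loc c r) = DONE \/ (st (loc c r) = EXPLORE /\ ph (loc c r) = DummyLoop)),
      (forall v, isset c v) & (forall v, v != r -> parok c v)].

Definition expok K (c : config V) x :=
  [/\ d x < K, (x != r -> done K c x),
      todo (loc c x) \subset nbrs e x :\: parset (par (loc c x)) &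
      exists w, [/\ wait (loc c x) = Some w, e x w, w \notin todo (loc c x),
        (forall u, isset c u -> par (loc c u) = Some x -> u \in todo (loc c x) -> fresh K c u) &
        (forall u, isset c u -> par (loc c u) = Some x -> u \notin todo (loc c x) -> u != w ->
           st (loc c u) = IDLE /\ done K c u) /\
        (forall u, e x u -> u \notin todo (loc c x) -> u != w -> isset c u)]].

Definition topok K (c : config V) t w (b : bool) :=
  [/\ st (loc c t) = EXPLORE, wait (loc c t) = Some w, st (loc c w) <> EXPLORE,
      (forall a a', chan c a a' =
        if b then nat_of_bool ((a == t) && (a' == w)) else nat_of_bool ((a == w) && (a' == t))) &
      [/\ (forall y, st (loc c y) = EXPLORE -> d y <= d t),
      (forall x, st (loc c x) = EXPLORE -> x != t ->
        exists w', [/\ wait (loc c x) = Some w', st (loc c w') = EXPLORE & par (loc c w') = Some x]) &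
      (if b then (isset c w -> par (loc c w) = Some t -> fresh K c w)
      else (isset c w /\ (par (loc c w) = Some t -> st (loc c w) = IDLE /\ done K c w)))]].

Record R2 K (c : config V) : Prop := {
  r2_root : st (loc c r) = EXPLORE;
  r2_ph : ph (loc c r) = MainLoop;
  r2_par : par (loc c r) = None;
  r2_K : cnt (loc c r) = K;
  r2_K1 : 0 < K;
  r2_Kn : K <= n - 1 \/ n = 1;
  r2_low : forall v, d v < K -> isset c v;
  r2_high : forall v, K < d v -> st (loc c v) = INIT;
  r2_set : forall v, v != r -> isset c v ->
     [/\ parok c v, st (loc c v) = IDLE \/ st (loc c v) = EXPLORE & fresh K c v \/ done K c v];
  r2_exp : forall x, st (loc c x) = EXPLORE -> expok K c x;
  r2_chain : forall x, x != r -> st (loc c x) = EXPLORE ->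
     exists p, [/\ par (loc c x) = Some p, st (loc c p) = EXPLORE & wait (loc c p) = Some x];
  r2_uniq : forall x y, st (loc c x) = EXPLORE -> st (loc c y) = EXPLORE -> d x = d y -> x = y;
  r2_F1 : forall v p, v != r -> isset c v -> par (loc c v) = Some p -> p != r ->
     fresh K c p -> fresh K c v;
  r2_F2 : forall v, v != r -> st (loc c v) = IDLE -> done K c v -> d v < K ->
     (forall u, e v u -> isset c u) /\
     (forall u, isset c u -> par (loc c u) = Some v -> st (loc c u) = IDLE /\ done K c u);
  r2_top : exists t w b, topok K c t w b
}.

Definition Inv c := R0 c \/ R1 c \/ (exists K, R2 K c) \/ R3 c.

Lemma upd_eq (f : V -> local V) u l : upd_loc f u l u = l.
Proof. by rewrite /upd_loc eqxx. Qed.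
Lemma upd_ne (f : V -> local V) u l x : x != u -> upd_loc f u l x = f x.
Proof. by rewrite /upd_loc => /negPf ->. Qed.

Lemma notset c v : ~ isset c v -> st (loc c v) = INIT.
Proof. by rewrite /isset; case: (st _) => // H; case: H. Qed.

Lemma isset_dec c v : isset c v \/ st (loc c v) = INIT.
Proof. by rewrite /isset; case: (st _); [right|left..]. Qed.

Lemma n_one : (forall v, v = r) -> n = 1.
Proof. by move=> H; rewrite /nnodes; apply: (@eq_card1 _ r) => y; rewrite !inE (H y) eqxx. Qed.

Lemma n_pos : 0 < n.
Proof. by rewrite /nnodes; apply/card_gt0P; exists r. Qed.

Lemma d_le v : d v <= n - 1.
Proof. by rewrite -ltnS subn1 prednK ?n_pos // d_bound. Qed.

Lemma proceed_basic (l l' : local V) s : proceed l l' s ->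
  [/\ cnt l' = cnt l, par l' = par l & st l' <> INIT].
Proof.
elim=> {l l' s}.
- by move=> *; split.
- by move=> l l' s _ _ _ _ _ _ [-> -> ?].
- by move=> l *; split=> //=; case: ifP.
Qed.

Lemma proceed_cases (l l' : local V) s : proceed l l' s -> cnt l <> n - 1 ->
  (exists w, [/\ w \in todo l,
     l' = Local EXPLORE (par l) (chl l) (cnt l) (ph l) (todo l :\ w) (Some w) & s = Some w])
  \/ [/\ todo l = set0, l' = Local IDLE (par l) (chl l) (cnt l) (ph l) set0 None & s = par l].
Proof.
case=> {l l' s}.
- by move=> l w _ _ wt _; left; exists w.
- by move=> l l' s _ _ _ _ ->.
- move=> l _ _ t0 _ cn; right; split=> //.
  by have /eqP/negPf -> := cn.
Qed.

Lemma proceed_dummy (l l' : local V) s : proceed l l' s -> ph l = DummyLoop -> cnt l = n - 1 ->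
  cnt l' = cnt l /\ (st l' = DONE \/ (st l' = EXPLORE /\ ph l' = DummyLoop)).
Proof.
case=> {l l' s}.
- by move=> l w _ _ _ /= -> _; split=> //; right.
- by move=> l l' s _ _ ->.
- by move=> l _ _ _ _ _ /= ->; rewrite eqxx; split=> //; left.
Qed.

Lemma proceed_main_n1 (l l' : local V) s : proceed l l' s -> ph l = MainLoop -> cnt l = n - 1 ->
  (exists w, [/\ w \in todo l,
     l' = Local EXPLORE (par l) (chl l) (cnt l) (ph l) (todo l :\ w) (Some w) & s = Some w])
  \/ [/\ todo l = set0, cnt l' = cnt l &
        (st l' = DONE \/ (st l' = EXPLORE /\ ph l' = DummyLoop))].
Proof.
case=> {l l' s}.
- by move=> l w _ _ wt _; left; exists w.
- move=> l l' s _ _ _ t0 _ pr _ cn; right.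
  by have [H1 H2] := proceed_dummy pr erefl cn; split.
- by move=> l _ _ _ [-> //|H _ C].
Qed.

Lemma handle_mono u v (l l' : local V) s : handle e u v l l' s -> st l <> INIT ->
  st l' <> INIT /\ par l' = par l.
Proof.
case=> {l l' s}.
- by move=> l -> [].
- by move=> l _ _ H; split.
- by move=> l l' s _ _ /proceed_basic[_ -> ?].
- by move=> l l' s _ _ /proceed_basic[_ -> ?].
- by move=> l _ H; split.
Qed.

Lemma parok_mono (c c' : config V) v :
  (forall x, isset c x -> isset c' x) -> par (loc c' v) = par (loc c v) ->
  parok c v -> parok c' v.
Proof. by move=> H1 H2 [p [pv ev dv sp]]; exists p; rewrite H2; split=> //; apply: H1. Qed.

Lemma R0_init : R0 (init_config V).
Proof. by split. Qed.

Lemma R0_step c c' : R0 c -> step e r c c' -> Inv c'.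
Proof.
move=> H0 Hs; case: Hs H0 => {c c'}.
- move=> c _ [Hst Hch]; right; left; split=> /=; rewrite ?upd_eq //.
  + by have := n_pos; rewrite /=; lia.
  + split.
    * move=> v; rewrite /isset /=; case: (eqVneq v r) => [->|vr].
        by rewrite upd_eq d_r.
      rewrite upd_ne // Hst; split=> [H|]; first by case: H.
      by rewrite leqn0 => /eqP/d_eq0 /eqP; rewrite (negPf vr).
    * move=> v vr; rewrite /isset /= upd_ne //.
- by move=> c l' s Hst _ [Hst' _]; rewrite Hst' in Hst.
- by move=> c v u l' s Hch _ [_ Hch']; rewrite Hch' in Hch.
Qed.


Lemma handle_root3 u v (l l' : local V) s : handle e u v l l' s -> cnt l = n - 1 ->
  (st l = DONE \/ (st l = EXPLORE /\ ph l = DummyLoop)) ->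
  cnt l' = n - 1 /\ (st l' = DONE \/ (st l' = EXPLORE /\ ph l' = DummyLoop)).
Proof.
case=> {l l' s}.
- by move=> l -> _ [|[]].
- by move=> l [->|->] _ C [|[]] //; split=> //; left.
- by move=> l l' s -> _ _ _ [|[]].
- move=> l l' s E _ pr C [D|[_ P]]; first by rewrite E in D.
  by have [-> H] := proceed_dummy pr P C.
- by move=> l _ C H.
Qed.

Lemma R3_step c c' : R3 c -> step e r c c' -> Inv c'.
Proof.
move=> H0 Hs; case: Hs H0 => {c c'}.
- by move=> c Hst [_ [H|[H _]] _ _]; rewrite Hst in H.
- by move=> c l' s Hst _ [_ [H|[H _]] _ _]; rewrite Hst in H.
move=> c v u l' s _ hd [Hc Hr Hset Hpar].
have [Hu1 Hu2] := handle_mono hd (Hset u).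
have Hset' : forall x, isset (Config (upd_loc (loc c) u l') (send (consume (chan c) v u) u s)) x.
  move=> x; rewrite /isset /=; case: (eqVneq x u) => [->|xu]; first by rewrite upd_eq.
  by rewrite upd_ne //; apply: Hset.
right; right; right.
have [Hrc Hrs] : cnt (upd_loc (loc c) u l' r) = n - 1 /\
  (st (upd_loc (loc c) u l' r) = DONE \/
   (st (upd_loc (loc c) u l' r) = EXPLORE /\ ph (upd_loc (loc c) u l' r) = DummyLoop)).
  case: (eqVneq r u) => [ru|ru]; last by rewrite upd_ne.
  by move: hd; rewrite -ru upd_eq => hd; apply: (handle_root3 hd).
split=> // x xr; apply: (parok_mono (c := c)) => //; last by apply: Hpar.
by rewrite /=; case: (eqVneq x u) => [->|xu]; rewrite ?upd_eq ?upd_ne.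
Qed.


Lemma R1_noexp c x : R1 c -> st (loc c x) <> EXPLORE.
Proof.
case=> Hr _ _ _ [_ Hs]; case: (eqVneq x r) => [->|xr]; first by rewrite Hr.
have [H|->] := isset_dec c x; last by [].
by have [_ -> _] := Hs x xr H.
Qed.

Lemma R1_send c (l' : local V) w : R1 c ->
  st l' = EXPLORE -> par l' = None -> cnt l' = (cnt (loc c r)).+1 -> ph l' = MainLoop ->
  todo l' = nbrs e r :\ w -> wait l' = Some w -> w \in nbrs e r ->
  R2 (cnt (loc c r)).+1 (Config (upd_loc (loc c) r l') (send (chan c) r (Some w))).
Proof.
move=> H1 Es Ep Ec Eph Et Ew wn.
have Hnx := R1_noexp (c := c) ^~ H1.
case: H1 => Hr Hp HK Hch [Hiff Hs].
set K := cnt (loc c r).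
set c' := Config _ _.
have ewr : e r w by move: wn; rewrite in_set.
have wr : w != r by apply/eqP => E; move: ewr; rewrite E e_irr.
have L'r : loc c' r = l' by rewrite /= upd_eq.
have L'x : forall x, x != r -> loc c' x = loc c x by move=> x xr; rewrite /= upd_ne.
have setr : isset c' r by rewrite /isset L'r Es.
have setx : forall x, x != r -> isset c' x -> isset c x by move=> x xr; rewrite /isset L'x.
have setx' : forall x, isset c x -> isset c' x.
  by move=> x; case: (eqVneq x r) => [->|xr] //; rewrite /isset L'x.
have expr : forall x, st (loc c' x) = EXPLORE -> x = r.
  move=> x; case: (eqVneq x r) => [//|xr]; rewrite L'x // => H; by case: (Hnx x H).
have dK : forall x, x != r -> isset c x -> done K c x by move=> x xr /(Hs x xr)[].
have fr : forall x, x != r -> isset c' x -> fresh K.+1 c' x.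
  move=> x xr Hx; have := dK x xr (setx x xr Hx); rewrite /fresh /done L'x // => <-; lia.
have chn : forall u, u != r -> isset c' u -> par (loc c' u) = Some r -> u \in nbrs e r.
  move=> u ur Hu'; have Hu := setx u ur Hu'; have [[p [pu ep _ _]] _ _] := Hs u ur Hu.
  by rewrite L'x // pu => -[<-]; rewrite in_set e_sym.
split.
- by rewrite L'r.
- by rewrite L'r.
- by rewrite L'r.
- by rewrite L'r.
- by [].
- by move: HK; lia.
- move=> v dv; case: (eqVneq v r) => [->//|vr]; apply: setx'; apply/Hiff; lia.
- move=> v dv; have vr : v != r by apply/eqP => E; move: dv; rewrite E d_r.
  rewrite L'x //; apply: notset => /Hiff; lia.
- move=> v vr Hv; have Hv0 := setx v vr Hv; have [Hpo Hi _] := Hs v vr Hv0.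
  split; last by left; apply: fr.
    by apply: (parok_mono setx') => //; rewrite L'x.
  by left; rewrite L'x.
- move=> x /expr ->; split.
  + by rewrite d_r.
  + by rewrite eqxx.
  + by rewrite L'r Et Ep setD0 subD1set.
  exists w; rewrite L'r Et Ew; split=> //.
  + by rewrite setD11.
  + move=> u Hu; case: (eqVneq u r) => [->|ur]; first by rewrite L'r Ep.
    by move=> _ _; apply: fr.
  + split.
      move=> u Hu; case: (eqVneq u r) => [->|ur]; first by rewrite L'r Ep.
      by move=> Hpu; rewrite in_setD1 (chn u ur Hu Hpu) andbT => /negbNE ->.
    by move=> u eru; rewrite in_setD1 in_set eru andbT => /negbNE ->.
- by move=> x xr /expr E; move: xr; rewrite E eqxx.
- by move=> x y /expr -> /expr ->.
- by move=> v p vr Hv _ _ _; apply: fr.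
- move=> v vr Hi Hd _; exfalso.
  have Hv : isset c' v by rewrite /isset Hi.
  have := fr v vr Hv; move: Hd; rewrite /fresh /done; lia.
exists r, w, true; split.
- by rewrite L'r.
- by rewrite L'r.
- by rewrite L'x //; apply: Hnx.
- by move=> a a'; rewrite /= /send Hch; case: ifP.
split.
- by move=> y /expr ->.
- by move=> x /expr ->; rewrite eqxx.
- by move=> Hw _; apply: fr.
Qed.

Lemma R1_step c c' : R1 c -> step e r c c' -> Inv c'.
Proof.
move=> H0 Hs; case: Hs H0 => {c c'}.
- by move=> c Hst [H _ _ _ _]; rewrite Hst in H.
- move=> c l' s _ pr H1.
  have Hp : par (loc c r) = None by case: H1.
  set K := cnt (loc c r).
  move: pr; rewrite /start_explore Hp /= setD0.
  case: (eqVneq K.+1 (n - 1)) => [EK|NK] pr.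
    case: (proceed_main_n1 pr erefl EK) => /=.
      move=> [w [wn -> ->]]; right; right; left; exists K.+1.
      by apply: R1_send.
    move=> [t0 _ _]; exfalso.
    have := n_one (fun v => nbrs_r_empty v t0); move: EK; lia.
  have NK' : K.+1 <> n - 1 by apply/eqP.
  case: (proceed_cases pr NK') => /=.
    move=> [w [wn -> ->]]; right; right; left; exists K.+1.
    by apply: R1_send.
  move=> [t0 -> ->]; right; left.
  have all_r := fun v => nbrs_r_empty v t0.
  split=> /=; rewrite ?upd_eq //.
  + by right; apply: n_one.
  + by case: H1.
  split.
    move=> v; rewrite (all_r v) d_r /isset /= upd_eq; split=> //.
  by move=> v; rewrite (all_r v) eqxx.
- by move=> c v u l' s Hch _ [_ _ _ Hch' _]; rewrite Hch' in Hch.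
Qed.


Lemma top_facts K c t w b : R2 K c -> topok K c t w b ->
  [/\ w != r, e t w, t != w, w \notin todo (loc c t) & d t < K].
Proof.
move=> H [Ht Hw Hnw _ _].
have wr : w != r by apply/eqP => E; apply: Hnw; rewrite E (r2_root H).
have tw : t != w by apply/eqP => E; apply: Hnw; rewrite -E.
have [dt _ _ [w0 [Hw0 etw wt _ _]]] := r2_exp H Ht.
by move: Hw0; rewrite Hw => -[E]; rewrite -E in etw wt.
Qed.

Lemma consume0 K c t w b : topok K c t w b ->
  forall a a', consume (chan c) (if b then t else w) (if b then w else t) a a' = 0.
Proof.
case=> _ _ _ Hch _ a a'; rewrite /consume !Hch.
by case: b {Hch}; case: ifP => //= ->.
Qed.

Lemma send0 (ch : V -> V -> nat) u x : (forall a a', ch a a' = 0) ->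
  forall a a', send ch u (Some x) a a' = (a == u) && (a' == x).
Proof. by move=> H a a'; rewrite /send H; case: ifP. Qed.

Lemma done_fresh K c v : done K c v -> fresh K c v -> False.
Proof. rewrite /done /fresh; lia. Qed.

Lemma caseAD K c t w (l' : local V) : R2 K c -> topok K c t w true ->
  st l' = IDLE -> par l' = Some t -> (d t).+1 = d w -> cnt l' + d w = K ->
  (forall v, isset c v -> par (loc c v) <> Some w) ->
  (d w < K -> forall u, e w u -> isset c u) ->
  R2 K (Config (upd_loc (loc c) w l') (send (consume (chan c) t w) w (Some t))).
Proof.
move=> H T Es Ep Edw Ec nochild Hnb.
have Hi : st (loc c w) <> EXPLORE by case: T.
have [wr etw tw wnt dtK] := top_facts H T.
have T0 := T; case: T0 => Ht Hwt _ _ [Hdt Hoth _].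
set c' := Config _ _.
have L'w : loc c' w = l' by rewrite /= upd_eq.
have L'x : forall x, x != w -> loc c' x = loc c x by move=> x xw; rewrite /= upd_ne.
have setw : isset c' w by rewrite /isset L'w Es.
have setx : forall x, x != w -> isset c' x -> isset c x by move=> x xw; rewrite /isset L'x.
have setx' : forall x, isset c x -> isset c' x.
  by move=> x; case: (eqVneq x w) => [->|xw] //; rewrite /isset L'x.
have dw : d w <= K by rewrite -Edw.
have expx : forall x, st (loc c' x) = EXPLORE -> x != w /\ st (loc c x) = EXPLORE.
  move=> x; case: (eqVneq x w) => [->|xw]; first by rewrite L'w Es.
  by rewrite L'x.
have tr_done : t != r -> done K c t.
  by have [_ Hd _ _] := r2_exp H Ht.
have cnt' : forall x, x != w -> cnt (loc c' x) = cnt (loc c x) by move=> x xw; rewrite L'x.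
have done' : forall x, x != w -> done K c' x = done K c x by move=> x xw; rewrite /done cnt'.
have fresh' : forall x, x != w -> fresh K c' x = fresh K c x by move=> x xw; rewrite /fresh cnt'.
split.
- by rewrite L'x ?(r2_root H) // eq_sym.
- by rewrite L'x ?(r2_ph H) // eq_sym.
- by rewrite L'x ?(r2_par H) // eq_sym.
- by rewrite L'x ?(r2_K H) // eq_sym.
- exact: r2_K1 H.
- exact: r2_Kn H.
- by move=> v /(r2_low H) /setx'.
- move=> v dv; have vw : v != w by apply/eqP => E; move: dv; rewrite E; lia.
  by rewrite L'x // (r2_high H).
- move=> v vr Hv; case: (eqVneq v w) => [->|vw].
    split.
    + exists t; rewrite L'w Ep e_sym; split=> //.
      by apply: setx'; rewrite /isset Ht.
    + by left; rewrite L'w.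
    + by right; rewrite /done L'w Ec.
  have [Hpo Hst Hfd] := r2_set H vr (setx v vw Hv).
  split; first by apply: (parok_mono setx') => //; rewrite L'x.
    by rewrite L'x.
  by rewrite fresh' // done' //.
- move=> x /expx [xw Hx]; have [dx Hdx Hsub [w0 [Hw0 ew0 w0t E1 [E2 E3]]]] := r2_exp H Hx.
  split=> //.
  + by rewrite done' //; apply: Hdx.
  + by rewrite L'x.
  exists w0; rewrite L'x //; split=> //.
  + move=> u Hu; case: (eqVneq u w) => [->|uw].
      rewrite L'w Ep => -[<-]; by rewrite (negPf wnt).
    by rewrite L'x // fresh' // => Hp; apply: E1 => //; apply: setx Hu.
  split.
    move=> u Hu; case: (eqVneq u w) => [->|uw].
      rewrite L'w Ep => -[E] _; move: Hw0; rewrite -E Hwt => -[->]; by rewrite eqxx.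
    by rewrite L'x // done' // => Hp Hnt Hnw; apply: E2 => //; apply: setx Hu.
  by move=> u exu Hnt Hnw; apply: setx'; apply: E3.
- move=> x xr /expx [xw Hx]; have [p [pp Hp Hwp]] := r2_chain H xr Hx.
  exists p; rewrite L'x // pp; split=> //.
    have pw : p != w by apply/eqP => E; move: Hp; rewrite E.
    by rewrite L'x.
  have pw : p != w by apply/eqP => E; move: Hp; rewrite E.
  by rewrite L'x.
- by move=> x y /expx [_ Hx] /expx [_ Hy]; apply: (r2_uniq H).
- move=> v p vr Hv; case: (eqVneq v w) => [->|vw].
    rewrite L'w Ep => -[<-] Htr; rewrite (fresh' _ tw).
    by move/(done_fresh (tr_done Htr)).
  rewrite L'x // => Hp pr; have pw : p != w.
    by apply/eqP => E; case: (nochild v (setx v vw Hv)); rewrite Hp E.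
  by rewrite fresh' // fresh' //; apply: (r2_F1 H vr (setx v vw Hv) Hp pr).
- move=> v vr; case: (eqVneq v w) => [->|vw].
    move=> _ _ dwK; split; first by move=> u /(Hnb dwK) /setx'.
    move=> u Hu; case: (eqVneq u w) => [->|uw]; first by rewrite L'w Ep => -[E]; move: tw; rewrite E eqxx.
    by rewrite L'x // => Hp; case: (nochild u (setx u uw Hu)).
  rewrite L'x // done' // => Hi' Hd dv.
  have [F1 F2] := r2_F2 H vr Hi' Hd dv; split.
    by move=> u /F1 /setx'.
  move=> u Hu; case: (eqVneq u w) => [->|uw].
    by rewrite L'w Ep => -[E]; move: Hi'; rewrite -E Ht.
  by rewrite L'x // done' // => Hp; apply: F2 => //; apply: setx Hu.
exists t, w, false; split.
- by rewrite (L'x _ tw).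
- by rewrite (L'x _ tw).
- by rewrite L'w Es.
- by move=> a a'; have := consume0 T a a'; rewrite /c' /= => ->; case: ifP.
split.
- by move=> y /expx [_ Hy]; apply: Hdt.
- move=> x /expx [xw Hx] xt; have [w' [Hw' Hex Hpw']] := Hoth x Hx xt.
  have w'w : w' != w by apply/eqP => E; move: Hex; rewrite E.
  by exists w'; rewrite !L'x.
- split=> //; rewrite L'w Ep => _; split=> //.
  by rewrite /done L'w Ec.
Qed.
Definition same_loc (c c' : config V) :=
  forall x, [/\ st (loc c' x) = st (loc c x), par (loc c' x) = par (loc c x),
     cnt (loc c' x) = cnt (loc c x), todo (loc c' x) = todo (loc c x) &
     wait (loc c' x) = wait (loc c x)].

Lemma R2_transfer K c c' : R2 K c -> same_loc c c' -> ph (loc c' r) = ph (loc c r) ->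
  (exists t w b, topok K c' t w b) -> R2 K c'.
Proof.
move=> H E Eph Htop.
have Est x : st (loc c' x) = st (loc c x) by case: (E x).
have Epar x : par (loc c' x) = par (loc c x) by case: (E x).
have Ecnt x : cnt (loc c' x) = cnt (loc c x) by case: (E x).
have Etodo x : todo (loc c' x) = todo (loc c x) by case: (E x).
have Ewait x : wait (loc c' x) = wait (loc c x) by case: (E x).
have Eset x : isset c' x <-> isset c x by rewrite /isset Est.
have Efresh x : fresh K c' x = fresh K c x by rewrite /fresh Ecnt.
have Edone x : done K c' x = done K c x by rewrite /done Ecnt.
have Eparok x : parok c' x <-> parok c x.
  split=> -[p [H1 H2 H3 H4]]; exists p; (split=> //; first by rewrite -H1 Epar).
    by apply/Eset.
  by apply/Eset.
split.
- by rewrite Est (r2_root H).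
- by rewrite Eph (r2_ph H).
- by rewrite Epar (r2_par H).
- by rewrite Ecnt (r2_K H).
- exact: r2_K1 H.
- exact: r2_Kn H.
- by move=> v /(r2_low H) /Eset.
- by move=> v /(r2_high H); rewrite Est.
- move=> v vr /Eset Hv; have [H1 H2 H3] := r2_set H vr Hv.
  by rewrite !Est Efresh Edone; split=> //; apply/Eparok.
- move=> x; rewrite Est => /(r2_exp H) [H1 H2 H3 [w0 [H4 H5 H6 H7 [H8 H9]]]].
  split=> //; first by rewrite Edone.
    by rewrite Etodo Epar.
  exists w0; rewrite Ewait Etodo; split=> //.
  + by move=> u /Eset Hu; rewrite Epar Efresh; apply: H7.
  split.
    by move=> u /Eset Hu; rewrite Epar Est Edone; apply: H8.
  by move=> u eu ut uw; apply/Eset; apply: H9.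
- move=> x xr; rewrite Est => /(r2_chain H xr) [p [H1 H2 H3]].
  by exists p; rewrite Epar Est Ewait.
- by move=> x y; rewrite !Est; apply: (r2_uniq H).
- move=> v p vr /Eset Hv; rewrite Epar !Efresh; exact: (r2_F1 H vr Hv).
- move=> v vr; rewrite Est Edone => Hi Hd dv; have [F1 F2] := r2_F2 H vr Hi Hd dv.
  split; first by move=> u /F1 /Eset.
  by move=> u /Eset Hu; rewrite Epar Est Edone; apply: F2.
exact: Htop.
Qed.

Lemma caseB K c t w (l' : local V) : R2 K c -> topok K c t w true ->
  st (loc c w) = IDLE -> par (loc c w) <> Some t ->
  st l' = st (loc c w) -> par l' = par (loc c w) -> cnt l' = cnt (loc c w) ->
  todo l' = todo (loc c w) -> wait l' = wait (loc c w) ->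
  R2 K (Config (upd_loc (loc c) w l') (send (consume (chan c) t w) w (Some t))).
Proof.
move=> H T Hi Hp Es Ep Ec Et Ew.
have [wr etw tw wnt dtK] := top_facts H T.
have T0 := T; case: T0 => Ht Hwt Hnw _ [Hdt Hoth _].
set c' := Config _ _.
have SL : same_loc c c'.
  move=> x; rewrite /c' /=; case: (eqVneq x w) => [->|xw]; first by rewrite upd_eq.
  by rewrite upd_ne.
have Est x : st (loc c' x) = st (loc c x) by case: (SL x).
apply: (R2_transfer H SL).
  by rewrite /c' /= upd_ne // eq_sym.
exists t, w, false; split.
- by rewrite Est.
- by case: (SL t) => _ _ _ _ ->.
- by rewrite Est.
- by move=> a a'; have := consume0 T a a'; rewrite /c' /= => ->; case: ifP.
split.
- by move=> y; rewrite Est => /Hdt.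
- move=> x; rewrite Est => Hx xt; have [w' [Hw' Hex Hpw']] := Hoth x Hx xt.
  by exists w'; case: (SL x) => _ _ _ _ ->; case: (SL w') => -> -> _ _ _.
- split; first by rewrite /isset Est Hi.
  by case: (SL w) => _ -> _ _ _.
Qed.

Lemma par_not_back K c x y : R2 K c -> isset c y -> par (loc c y) = Some x ->
  par (loc c x) <> Some y.
Proof.
move=> H Hy Hyx Hxy.
have yr : y != r by apply/eqP => E; move: Hyx; rewrite E (r2_par H).
have xr : x != r by apply/eqP => E; move: Hxy; rewrite E (r2_par H).
have [[p [pp _ dp sp]] _ _] := r2_set H yr Hy.
move: pp; rewrite Hyx => -[Ep]; rewrite -Ep in dp sp.
have [[q [qq _ dq _]] _ _] := r2_set H xr sp.
move: qq; rewrite Hxy => -[Eq]; rewrite -Eq in dq; lia.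
Qed.

Lemma caseC K c t w w2 (l' : local V) : R2 K c -> topok K c t w true ->
  st (loc c w) = IDLE -> par (loc c w) = Some t ->
  st l' = EXPLORE -> par l' = Some t -> cnt l' = (cnt (loc c w)).+1 ->
  todo l' = (nbrs e w :\: [set t]) :\ w2 -> wait l' = Some w2 ->
  w2 \in nbrs e w :\: [set t] ->
  R2 K (Config (upd_loc (loc c) w l') (send (consume (chan c) t w) w (Some w2))).
Proof.
move=> H T Hi Hp Es Ep Ec Et Ew w2n.
have [wr etw tw wnt dtK] := top_facts H T.
have T0 := T; case: T0 => Ht Hwt Hnw _ [Hdt Hoth Hfw].
have Hsw : isset c w by rewrite /isset Hi.
have fw : fresh K c w by apply: Hfw.
have [[p0 [pp0 _ dtw _]] _ _] := r2_set H wr Hsw.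
move: pp0; rewrite Hp => -[Ep0]; rewrite -Ep0 in dtw.
have ew2 : e w w2 by move: w2n; rewrite in_setD in_set => /andP[].
have w2t : w2 != t by move: w2n; rewrite in_setD in_set1 => /andP[].
have w2w : w2 != w by apply/eqP => E; move: ew2; rewrite E e_irr.
have tr_done : t != r -> done K c t by have [_ Hd _ _] := r2_exp H Ht.
set c' := Config _ _.
have L'w : loc c' w = l' by rewrite /= upd_eq.
have L'x : forall x, x != w -> loc c' x = loc c x by move=> x xw; rewrite /= upd_ne.
have setx : forall x, isset c' x -> isset c x.
  move=> x; case: (eqVneq x w) => [->|xw] //; by rewrite /isset L'x.
have setx' : forall x, isset c x -> isset c' x.
  move=> x; case: (eqVneq x w) => [->|xw]; first by rewrite /isset L'w Es.
  by rewrite /isset L'x.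
have done' : forall x, x != w -> done K c' x = done K c x by move=> x xw; rewrite /done L'x.
have fresh' : forall x, x != w -> fresh K c' x = fresh K c x by move=> x xw; rewrite /fresh L'x.
have donew : done K c' w by move: fw; rewrite /done /fresh L'w Ec; lia.
have nw2 : st (loc c w2) <> EXPLORE.
  move=> Hw2; have := Hdt _ Hw2; have := d_edge' ew2 => h1 h2.
  have E : d w2 = d t by lia.
  by move: w2t; rewrite (r2_uniq H Hw2 Ht E) eqxx.
have expx : forall x, st (loc c' x) = EXPLORE -> x = w \/ (x != w /\ st (loc c x) = EXPLORE).
  move=> x; case: (eqVneq x w) => [->|xw]; first by left.
  by rewrite L'x // => ?; right.
have tnotchild : par (loc c t) <> Some w by apply: (par_not_back H Hsw Hp).
split.
- by rewrite L'x ?(r2_root H) // eq_sym.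
- by rewrite L'x ?(r2_ph H) // eq_sym.
- by rewrite L'x ?(r2_par H) // eq_sym.
- by rewrite L'x ?(r2_K H) // eq_sym.
- exact: r2_K1 H.
- exact: r2_Kn H.
- by move=> v /(r2_low H) /setx'.
- move=> v dv; have Hv := r2_high H dv; have vw : v != w by apply/eqP => E; move: Hv; rewrite E Hi.
  by rewrite L'x.
- move=> v vr Hv; case: (eqVneq v w) => [->|vw].
    split.
    + exists t; rewrite L'w Ep e_sym; split=> //.
      by apply: setx'; rewrite /isset Ht.
    + by right; rewrite L'w.
    + by right.
  have [Hpo Hst Hfd] := r2_set H vr (setx _ Hv).
  split; first by apply: (parok_mono setx') => //; rewrite L'x.
    by rewrite L'x.
  by rewrite fresh' // done' //.
- move=> x /expx [->|[xw Hx]].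
    split.
    + by move: fw; rewrite /fresh; lia.
    + by [].
    + by rewrite L'w Et Ep /= subD1set.
    exists w2; rewrite L'w Ew Et; split=> //.
    + by rewrite setD11.
    + move=> u Hu; case: (eqVneq u w) => [->|uw]; first by rewrite L'w Ep => -[E]; move: tw; rewrite E eqxx.
      rewrite L'x // fresh' // => Hpu _; apply: (r2_F1 H _ (setx _ Hu) Hpu wr fw).
      by apply/eqP => E; move: Hpu; rewrite E (r2_par H).
    split.
      move=> u Hu; case: (eqVneq u w) => [->|uw]; first by rewrite L'w Ep => -[E]; move: tw; rewrite E eqxx.
      rewrite L'x // => Hpu; rewrite in_setD1 in_setD in_set1 => Hn uw2; exfalso.
      have ur : u != r by apply/eqP => E; move: Hpu; rewrite E (r2_par H).
      have [[q [qq eq _ _]] _ _] := r2_set H ur (setx _ Hu).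
      move: qq; rewrite Hpu => -[Eq]; rewrite -Eq in eq.
      have ut : u != t by apply/eqP => E; apply: tnotchild; rewrite -E.
      by move: Hn; rewrite uw2 ut /= in_set e_sym eq.
    move=> u ewu; rewrite in_setD1 in_setD in_set1 in_set ewu andbT => Hn uw2.
    case: (eqVneq u t) => [->|ut]; first by apply: setx'; rewrite /isset Ht.
    by move: Hn; rewrite uw2 ut.
  have [dx Hdx Hsub [w0 [Hw0 ew0 w0t E1 [E2 E3]]]] := r2_exp H Hx.
  split=> //.
  + by rewrite done' //; apply: Hdx.
  + by rewrite L'x.
  exists w0; rewrite L'x //; split=> //.
  + move=> u Hu; case: (eqVneq u w) => [->|uw].
      rewrite L'w Ep => -[<-]; by rewrite (negPf wnt).
    by rewrite L'x // fresh' // => Hpu; apply: E1 => //; apply: setx _ Hu.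
  split.
    move=> u Hu; case: (eqVneq u w) => [->|uw].
      rewrite L'w Ep => -[E] _; move: Hw0; rewrite -E Hwt => -[->]; by rewrite eqxx.
    by rewrite L'x // done' // => Hpu Hnt Hnw'; apply: E2 => //; apply: setx _ Hu.
  by move=> u exu Hnt Hnw'; apply: setx'; apply: E3.
- move=> x xr /expx [Ex|[xw Hx]].
    by exists t; rewrite Ex L'w Ep !(L'x _ tw).
  have [p [pp Hpp Hwp]] := r2_chain H xr Hx.
  have pw : p != w by apply/eqP => E; move: Hpp; rewrite E Hi.
  by exists p; rewrite !L'x.
- have dw : d w = (d t).+1 by [].
  move=> x y /expx [->|[xw Hx]] /expx [->|[yw Hy]] //.
  + by move=> E; have := Hdt _ Hy; rewrite -E dw ltnn.
  + by move=> E; have := Hdt _ Hx; rewrite E dw ltnn.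
  + exact: (r2_uniq H).
- move=> v p vr Hv; case: (eqVneq v w) => [->|vw].
    rewrite L'w Ep => -[<-] Htr; rewrite (fresh' _ tw).
    by move/(done_fresh (tr_done Htr)).
  rewrite L'x // => Hpv pr; case: (eqVneq p w) => [->|pw].
    by move=> /(done_fresh donew).
  by rewrite fresh' // fresh' //; apply: (r2_F1 H vr (setx _ Hv) Hpv pr).
- move=> v vr; case: (eqVneq v w) => [->|vw]; first by rewrite L'w Es.
  rewrite L'x // done' // => Hi' Hd dv.
  have [F1 F2] := r2_F2 H vr Hi' Hd dv; split.
    by move=> u /F1 /setx'.
  move=> u Hu; case: (eqVneq u w) => [->|uw].
    by rewrite L'w Ep => -[E]; move: Hi'; rewrite -E Ht.
  by rewrite L'x // done' // => Hpu; apply: F2 => //; apply: setx _ Hu.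
exists w, w2, true; split.
- by rewrite L'w.
- by rewrite L'w.
- by rewrite L'x.
- by move=> a a'; have := consume0 T a a'; rewrite /c' /= => ->; case: ifP.
split.
- move=> y /expx [->//|[yw Hy]]; have := Hdt _ Hy; rewrite -dtw; lia.
- move=> x /expx [->|[xw Hx]]; first by rewrite eqxx.
  move=> _; case: (eqVneq x t) => [->|xt].
    by exists w; rewrite L'w (L'x _ tw).
  have [w' [Hw' Hex Hpw']] := Hoth x Hx xt.
  have w'w : w' != w by apply/eqP => E; move: Hex; rewrite E Hi.
  by exists w'; rewrite !L'x.
- rewrite L'x // => Hw2 Hp2; rewrite fresh' //.
  apply: (r2_F1 H _ (setx _ Hw2) Hp2 wr fw).
  by apply/eqP => E; move: Hp2; rewrite E (r2_par H).
Qed.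

Lemma caseE K c t w w2 (l' : local V) : R2 K c -> topok K c t w false ->
  st l' = EXPLORE -> par l' = par (loc c t) -> cnt l' = cnt (loc c t) ->
  todo l' = todo (loc c t) :\ w2 -> wait l' = Some w2 -> w2 \in todo (loc c t) ->
  (t = r -> ph l' = MainLoop) ->
  R2 K (Config (upd_loc (loc c) t l') (send (consume (chan c) w t) t (Some w2))).
Proof.
move=> H T Es Ep Ec Et Ew w2t Eph.
have [wr etw tw wnt dtK] := top_facts H T.
have T0 := T; case: T0 => Ht Hwt Hnw _ [Hdt Hoth [Hsw Hcw]].
have [_ Hdone Hsub [w0 [Hw0 _ _ E1 [E2 E3]]]] := r2_exp H Ht.
move: Hw0; rewrite Hwt => -[Ew0]; rewrite -Ew0 in E2 E3.
have w2n : w2 \in nbrs e t :\: parset (par (loc c t)) by apply: (subsetP Hsub).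
have etw2 : e t w2 by move: w2n; rewrite in_setD in_set => /andP[].
have w2p : w2 \notin parset (par (loc c t)) by move: w2n; rewrite in_setD => /andP[].
have w2t' : w2 != t by apply/eqP => E; move: etw2; rewrite E e_irr.
set c' := Config _ _.
have L't : loc c' t = l' by rewrite /= upd_eq.
have L'x : forall x, x != t -> loc c' x = loc c x by move=> x xt; rewrite /= upd_ne.
have Est : forall x, st (loc c' x) = st (loc c x).
  by move=> x; case: (eqVneq x t) => [->|xt]; rewrite ?L't ?Es ?Ht ?L'x.
have Epar : forall x, par (loc c' x) = par (loc c x).
  by move=> x; case: (eqVneq x t) => [->|xt]; rewrite ?L't ?Ep ?L'x.
have Ecnt : forall x, cnt (loc c' x) = cnt (loc c x).
  by move=> x; case: (eqVneq x t) => [->|xt]; rewrite ?L't ?Ec ?L'x.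
have Eset x : isset c' x <-> isset c x by rewrite /isset Est.
have Efresh x : fresh K c' x = fresh K c x by rewrite /fresh Ecnt.
have Edone x : done K c' x = done K c x by rewrite /done Ecnt.
have Eparok x : parok c' x -> parok c x.
  by move=> [p [H1 H2 H3 H4]]; exists p; split=> //; [rewrite -Epar | apply/Eset].
have Eparok' x : parok c x -> parok c' x.
  by move=> [p [H1 H2 H3 H4]]; exists p; split=> //; [rewrite Epar | apply/Eset].
have nw2 : st (loc c w2) <> EXPLORE.
  move=> Hw2; have := Hdt _ Hw2; have := d_edge' etw2 => h1 h2.
  case: (eqVneq (d w2) (d t)) => [E|NE].
    by move: w2t'; rewrite (r2_uniq H Hw2 Ht E) eqxx.
  have Edt : (d w2).+1 = d t by move: NE => /eqP; lia.
  have tr : t != r by apply/eqP => E; move: Edt; rewrite E d_r.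
  have [p [pp Hpp _]] := r2_chain H tr Ht.
  have [[q [qq _ dq _]] _ _] := r2_set H tr (ltac:(by rewrite /isset Ht)).
  move: qq; rewrite pp => -[Eq]; rewrite -Eq in dq.
  have E : d w2 = d p by lia.
  by move: w2p; rewrite pp (r2_uniq H Hw2 Hpp E) /= in_set1 eqxx.
split.
- by rewrite Est (r2_root H).
- case: (eqVneq r t) => [E|rt]; first by rewrite E L't (Eph (esym E)).
  by rewrite L'x ?(r2_ph H).
- by rewrite Epar (r2_par H).
- by rewrite Ecnt (r2_K H).
- exact: r2_K1 H.
- exact: r2_Kn H.
- by move=> v /(r2_low H) /Eset.
- by move=> v /(r2_high H); rewrite Est.
- move=> v vr /Eset Hv; have [H1 H2 H3] := r2_set H vr Hv.
  by rewrite !Est Efresh Edone; split=> //; apply: Eparok'.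
- move=> x; rewrite Est; case: (eqVneq x t) => [->|xt] Hx.
    split=> //.
    + by rewrite Edone.
    + rewrite L't Et Ep; apply: subset_trans Hsub; exact: subD1set.
    exists w2; rewrite L't Ew Et; split=> //.
    + by rewrite setD11.
    + move=> u /Eset Hu; rewrite Epar Efresh in_setD1 => Hpu /andP[_]; exact: E1.
    split.
      move=> u /Eset Hu; rewrite Epar Est Edone in_setD1 => Hpu Hn uw2.
      move: Hn; rewrite uw2 /= => Hn.
      case: (eqVneq u w) => [E|uw]; first by rewrite E; apply: Hcw; rewrite -E.
      exact: E2.
    move=> u etu; rewrite in_setD1 => Hn uw2; move: Hn; rewrite uw2 /= => Hn.
    apply/Eset; case: (eqVneq u w) => [->|uw] //; exact: E3.
  have [dx Hdx Hsub' [w1 [Hw1 ew1 w1t F1 [F2 F3]]]] := r2_exp H Hx.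
  split=> //.
  + by rewrite Edone.
  + by rewrite L'x.
  exists w1; rewrite L'x //; split=> //.
  + by move=> u /Eset Hu; rewrite Epar Efresh; exact: F1.
  split.
    by move=> u /Eset Hu; rewrite Epar Est Edone; exact: F2.
  by move=> u eu Hn Hw; apply/Eset; exact: F3.
- move=> x xr; rewrite Est => Hx; have [p [pp Hpp Hwp]] := r2_chain H xr Hx.
  exists p; rewrite Epar Est; split=> //.
  have pt : p != t by apply/eqP => E; move: Hwp; rewrite E Hwt => -[E']; apply: Hnw; rewrite E'.
  by rewrite L'x.
- by move=> x y; rewrite !Est; exact: (r2_uniq H).
- move=> v p vr /Eset Hv; rewrite Epar !Efresh; exact: (r2_F1 H vr Hv).
- move=> v vr; rewrite Est Edone => Hi Hd dv; have [F1 F2] := r2_F2 H vr Hi Hd dv.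
  split; first by move=> u /F1 /Eset.
  by move=> u /Eset Hu; rewrite Epar Est Edone; exact: F2.
exists t, w2, true; split.
- by rewrite Est.
- by rewrite L't.
- by rewrite Est.
- by move=> a a'; have := consume0 T a a'; rewrite /c' /= => ->; case: ifP.
split.
- by move=> y; rewrite Est => /Hdt.
- move=> x; rewrite Est => Hx xt; have [w' [Hw' Hex Hpw']] := Hoth x Hx xt.
  by exists w'; rewrite L'x // Est Epar.
- by move=> /Eset Hw2; rewrite Epar Efresh => Hp2; exact: E1.
Qed.

Lemma caseH K c t w p (l' : local V) : R2 K c -> topok K c t w false -> t != r ->
  todo (loc c t) = set0 -> par (loc c t) = Some p ->
  st l' = IDLE -> par l' = Some p -> cnt l' = cnt (loc c t) ->
  R2 K (Config (upd_loc (loc c) t l') (send (consume (chan c) w t) t (Some p))).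
Proof.
move=> H T tr Et0 Hpt Es Ep Ec.
have [wr etw tw wnt dtK] := top_facts H T.
have T0 := T; case: T0 => Ht Hwt Hnw _ [Hdt Hoth [Hsw Hcw]].
have [_ Hdone Hsub [w0 [Hw0 _ _ E1 [E2 E3]]]] := r2_exp H Ht.
move: Hw0; rewrite Hwt => -[Ew0]; rewrite -Ew0 in E2 E3.
have [p' [pp' Hpp Hwp]] := r2_chain H tr Ht.
move: pp'; rewrite Hpt => -[Ep']; rewrite -Ep' in Hpp Hwp.
have Hst : isset c t by rewrite /isset Ht.
have [[q [qq _ dpt _]] _ _] := r2_set H tr Hst.
move: qq; rewrite Hpt => -[Eq]; rewrite -Eq in dpt.
have pt : p != t by apply/eqP => E; move: dpt; rewrite E; lia.
have dt : done K c t by apply: Hdone.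
set c' := Config _ _.
have L't : loc c' t = l' by rewrite /= upd_eq.
have L'x : forall x, x != t -> loc c' x = loc c x by move=> x xt; rewrite /= upd_ne.
have Epar : forall x, par (loc c' x) = par (loc c x).
  by move=> x; case: (eqVneq x t) => [->|xt]; rewrite ?L't ?Ep ?Hpt ?L'x.
have Ecnt : forall x, cnt (loc c' x) = cnt (loc c x).
  by move=> x; case: (eqVneq x t) => [->|xt]; rewrite ?L't ?Ec ?L'x.
have Eset x : isset c' x <-> isset c x.
  by rewrite /isset; case: (eqVneq x t) => [->|xt]; rewrite ?L't ?Es ?Ht ?L'x.
have Efresh x : fresh K c' x = fresh K c x by rewrite /fresh Ecnt.
have Edone x : done K c' x = done K c x by rewrite /done Ecnt.
have Eparok' x : parok c x -> parok c' x.
  by move=> [p0 [H1 H2 H3 H4]]; exists p0; split=> //; [rewrite Epar | apply/Eset].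
have expx : forall x, st (loc c' x) = EXPLORE -> x != t /\ st (loc c x) = EXPLORE.
  move=> x; case: (eqVneq x t) => [->|xt]; first by rewrite L't Es.
  by rewrite L'x.
have Est : forall x, x != t -> st (loc c' x) = st (loc c x) by move=> x xt; rewrite L'x.
split.
- by rewrite Est ?(r2_root H) // eq_sym.
- by rewrite L'x ?(r2_ph H) // eq_sym.
- by rewrite Epar (r2_par H).
- by rewrite Ecnt (r2_K H).
- exact: r2_K1 H.
- exact: r2_Kn H.
- by move=> v /(r2_low H) /Eset.
- move=> v dv; have Hv := r2_high H dv; have vt : v != t by apply/eqP => E; move: Hv; rewrite E Ht.
  by rewrite Est.
- move=> v vr /Eset Hv; have [H1 H2 H3] := r2_set H vr Hv.
  rewrite Efresh Edone; split=> //; first by apply: Eparok'.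
  case: (eqVneq v t) => [->|vt]; first by rewrite L't Es; left.
  by rewrite Est.
- move=> x /expx [xt Hx].
  have [dx Hdx Hsub' [w1 [Hw1 ew1 w1t F1 [F2 F3]]]] := r2_exp H Hx.
  split=> //.
  + by rewrite Edone.
  + by rewrite L'x // Epar.
  exists w1; rewrite L'x //; split=> //.
  + by move=> u /Eset Hu; rewrite Epar Efresh; exact: F1.
  split.
    move=> u /Eset Hu; rewrite Epar Edone => Hpu Hn Hw.
    have ut : u != t.
      apply/eqP => E; move: Hpu; rewrite E Hpt => -[E']; move: Hwp; rewrite E' Hw1 => -[E''].
      by move: Hw; rewrite E E'' eqxx.
    by rewrite Est //; exact: F2.
  by move=> u eu Hn Hw; apply/Eset; exact: F3.
- move=> x xr /expx [xt Hx]; have [p0 [pp Hpp0 Hwp0]] := r2_chain H xr Hx.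
  have p0t : p0 != t by apply/eqP => E; move: Hwp0; rewrite E Hwt => -[E']; apply: Hnw; rewrite E'.
  by exists p0; rewrite Epar !L'x.
- by move=> x y /expx [_ Hx] /expx [_ Hy]; exact: (r2_uniq H).
- move=> v p0 vr /Eset Hv; rewrite Epar !Efresh; exact: (r2_F1 H vr Hv).
- move=> v vr; case: (eqVneq v t) => [->|vt].
    move=> _ _ dtK'; split.
      move=> u etu; apply/Eset; case: (eqVneq u w) => [->|uw] //.
      by apply: E3; rewrite ?Et0 ?in_set0.
    move=> u /Eset Hu; rewrite Epar Edone => Hpu.
    have ut : u != t by apply/eqP => E; move: Hpu; rewrite E Hpt => -[E']; move: pt; rewrite E' eqxx.
    rewrite Est //; case: (eqVneq u w) => [E|uw]; first by rewrite E; apply: Hcw; rewrite -E.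
    by apply: E2; rewrite ?Et0 ?in_set0.
  rewrite Est // Edone => Hi Hd dv; have [F1 F2] := r2_F2 H vr Hi Hd dv.
  split; first by move=> u /F1 /Eset.
  move=> u /Eset Hu; rewrite Epar Edone => Hpu.
  have ut : u != t by apply/eqP => E; move: Hpu; rewrite E Hpt => -[E']; move: Hi; rewrite -E' Hpp.
  by rewrite Est //; exact: F2.
exists p, t, false; split.
- by rewrite Est.
- by rewrite L'x.
- by rewrite L't Es.
- by move=> a a'; have := consume0 T a a'; rewrite /c' /= => ->; case: ifP.
split.
- move=> y /expx [yt Hy]; have := Hdt _ Hy.
  have : d y != d t by apply/eqP => E; move: yt; rewrite (r2_uniq H Hy Ht E) eqxx.
  move=> /eqP; lia.
- move=> x /expx [xt Hx] xp; have [w' [Hw' Hex Hpw']] := Hoth x Hx xt.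
  have w't : w' != t by apply/eqP => E; move: Hpw'; rewrite E Hpt => -[E']; move: xp; rewrite E' eqxx.
  by exists w'; rewrite !L'x // Epar.
- split; first by apply/Eset.
  by rewrite L't Es Ep => _; split=> //; rewrite Edone.
Qed.

Lemma root_end K c w : R2 K c -> topok K c r w false -> todo (loc c r) = set0 ->
  (forall v, d v <= K -> isset c v) /\
  (forall v, v != r -> isset c v -> st (loc c v) = IDLE /\ done K c v).
Proof.
move=> H T Et0.
have T0 := T; case: T0 => Ht Hwt Hnw _ [Hdt Hoth [Hsw Hcw]].
have [_ _ _ [w0 [Hw0 _ _ E1 [E2 E3]]]] := r2_exp H Ht.
move: Hw0; rewrite Hwt => -[Ew0]; rewrite -Ew0 in E2 E3.
have C1 : forall m v, d v <= m -> v != r -> d v < K -> st (loc c v) = IDLE /\ done K c v.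
  elim=> [|m IH] v dvm vr dvK.
    by move: dvm; rewrite leqn0 => /eqP /d_eq0 /eqP; rewrite (negPf vr).
  have Hv := r2_low H dvK.
  have [[p [pv _ dp sp]] _ _] := r2_set H vr Hv.
  case: (eqVneq p r) => [pr|pr].
    rewrite pr in pv.
    case: (eqVneq v w) => [E|vw]; first by rewrite E; apply: Hcw; rewrite -E.
    by apply: E2; rewrite ?Et0 ?in_set0.
  have [Hpi Hpd] := IH p (ltac:(lia)) pr (ltac:(lia)).
  have [_ F2] := r2_F2 H pr Hpi Hpd (ltac:(lia)).
  exact: F2.
have C2 : forall v, d v < K -> v != r -> st (loc c v) = IDLE /\ done K c v.
  by move=> v dv vr; apply: (C1 (d v)).
split.
  move=> v dv; case: (ltnP (d v) K) => [dvK|Kdv]; first by apply: (r2_low H).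
  have dvE : d v = K by apply/eqP; rewrite eqn_leq dv Kdv.
  have vr : v != r by apply/eqP => E; move: dvE (r2_K1 H); rewrite E d_r => <-.
  have [p [epv dp]] := d_pred vr.
  case: (eqVneq p r) => [pr|pr].
    rewrite pr in epv; case: (eqVneq v w) => [->|vw] //.
    by apply: E3; rewrite ?Et0 ?in_set0.
  have [Hpi Hpd] := C2 p (ltac:(lia)) pr.
  have [F1 _] := r2_F2 H pr Hpi Hpd (ltac:(lia)).
  exact: F1.
move=> v vr Hv; case: (ltnP (d v) K) => [dvK|Kdv]; first exact: C2.
case: (ltnP K (d v)) => [Kv|vK]; first by case: Hv; apply: (r2_high H).
have dvE : d v = K by apply/eqP; rewrite eqn_leq vK Kdv.
have [_ [Hi|He] [Hf|Hd]] := r2_set H vr Hv.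
- by move: Hf; rewrite /fresh dvE; lia.
- by [].
- have := Hdt _ He; rewrite d_r leqn0 => /eqP/d_eq0 /eqP; by rewrite (negPf vr).
- have := Hdt _ He; rewrite d_r leqn0 => /eqP/d_eq0 /eqP; by rewrite (negPf vr).
Qed.

Lemma caseF K c w (l' : local V) : R2 K c -> topok K c r w false -> todo (loc c r) = set0 ->
  K <> n - 1 -> st l' = IDLE -> par l' = None -> cnt l' = K ->
  R1 (Config (upd_loc (loc c) r l') (send (consume (chan c) w r) r None)).
Proof.
move=> H T Et0 NK Es Ep Ec.
have [C1 C2] := root_end H T Et0.
set c' := Config _ _.
have L'r : loc c' r = l' by rewrite /= upd_eq.
have L'x : forall x, x != r -> loc c' x = loc c x by move=> x xr; rewrite /= upd_ne.
have Eset x : isset c' x <-> isset c x.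
  rewrite /isset; case: (eqVneq x r) => [->|xr]; rewrite ?L'r ?Es ?(r2_root H) ?L'x //.
have setx' : forall x, isset c x -> isset c' x by move=> x /Eset.
split.
- by rewrite L'r.
- by rewrite L'r.
- by rewrite L'r Ec; case: (r2_Kn H) => ?; [left|right] => //; lia.
- by move=> a a'; have := consume0 T a a'; rewrite /c' /= => ->.
split.
  move=> v; rewrite L'r Ec; split.
    move=> /Eset Hv; rewrite leqNgt; apply/negP => /(r2_high H) Hi.
    by case: Hv.
  by move=> /C1 /Eset.
move=> v vr /Eset Hv; rewrite L'r Ec; have [Hi Hd] := C2 v vr Hv.
have [Hpo _ _] := r2_set H vr Hv.
split.
- by apply: (parok_mono setx') => //; rewrite L'x.
- by rewrite L'x.
- by rewrite /done L'x.
Qed.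

Lemma caseG K c w (l' : local V) s : R2 K c -> topok K c r w false -> todo (loc c r) = set0 ->
  K = n - 1 -> cnt l' = K -> (st l' = DONE \/ (st l' = EXPLORE /\ ph l' = DummyLoop)) ->
  R3 (Config (upd_loc (loc c) r l') (send (consume (chan c) w r) r s)).
Proof.
move=> H T Et0 EK Ec Es.
have [C1 C2] := root_end H T Et0.
set c' := Config _ _.
have L'r : loc c' r = l' by rewrite /= upd_eq.
have L'x : forall x, x != r -> loc c' x = loc c x by move=> x xr; rewrite /= upd_ne.
have setall : forall x, isset c' x.
  move=> x; case: (eqVneq x r) => [->|xr].
    by rewrite /isset L'r; case: Es => [->|[-> _]].
  by rewrite /isset L'x //; apply: C1; rewrite EK; apply: d_le.
split.
- by rewrite L'r Ec.
- by rewrite L'r.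
- exact: setall.
move=> v vr; have Hv : isset c v by have := setall v; rewrite /isset L'x.
have [Hpo _ _] := r2_set H vr Hv.
by apply: (parok_mono (c := c)) => //; rewrite L'x.
Qed.

Lemma R2_step K c c' : R2 K c -> step e r c c' -> Inv c'.
Proof.
move=> H0 Hs; case: Hs H0 => {c c'}.
- by move=> c Hst H; move: Hst; rewrite (r2_root H).
- by move=> c l' s Hst _ H; move: Hst; rewrite (r2_root H).
move=> c v u l' s Hch hd H.
have [t [w [b T]]] := r2_top H.
have [wr etw tw wnt dtK] := top_facts H T.
have T0 := T; case: T0 => Ht Hwt Hnw Hchan [Hdt Hoth Hb].
move: Hch; rewrite Hchan.
case: b T Hb Hchan => T Hb Hchan.
- (* request *)
  case: (eqVneq v t) => [Ev|] //; case: (eqVneq u w) => [Eu|]; last by rewrite andbF.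
  move=> _; rewrite Ev Eu in hd *; right; right; left; exists K.
  have Hw_init_idle : st (loc c w) = INIT \/ st (loc c w) = IDLE.
    case: (isset_dec c w) => [Hs|]; last by left.
    by have [_ [Hi|He] _] := r2_set H wr Hs; [right | case: Hnw].
  inversion hd as [l0 Hi E1 E2 E3|l0 Hid Hp E1 E2 E3|l0 l1 s0 Hi Hp pr E1 E2 E3|
                   l0 l1 s0 He Hw pr E1 E2 E3|l0 Hig E1 E2 E3].
  + have dw : d w = K.
      apply/eqP; rewrite eqn_leq; apply/andP; split; first by apply: leq_trans (d_edge etw) _.
      by rewrite leqNgt; apply/negP => /(r2_low H); rewrite /isset Hi.
    apply: caseAD => //=.
    * by have := d_edge etw; lia.
    * move=> x Hx Hpx; case: (eqVneq x r) => [xr|xr]; first by move: Hpx; rewrite xr (r2_par H).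
      have [[p [pp _ _ sp]] _ _] := r2_set H xr Hx.
      by move: pp; rewrite Hpx => -[Ep]; move: sp; rewrite -Ep /isset Hi.
    * by rewrite dw ltnn.
  + case: Hw_init_idle => Hi; first by move: Hid; rewrite Hi => -[].
    by apply: caseB.
  + subst l' s.
    have Hsw : isset c w by rewrite /isset Hi.
    have fw := Hb Hsw Hp.
    have Ncnt : cnt (start_explore e w (loc c w)) <> n - 1.
      rewrite /=; move: fw; rewrite /fresh => fw.
      case: (r2_Kn H) => HK; last by move: wr; rewrite (one_node w HK) eqxx.
      have := d_pos wr; lia.
    case: (proceed_cases pr Ncnt) => /=.
      move=> [w2 [w2n -> ->]]; rewrite Hp in w2n *.
      by apply: (caseC H T Hi Hp) => //.
    move=> [t0 -> ->]; rewrite Hp in t0 *.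
    have [[p0 [pp0 _ dtw _]] _ _] := r2_set H wr Hsw.
    move: pp0; rewrite Hp => -[Ep0]; rewrite -Ep0 in dtw.
    have tnc : par (loc c t) <> Some w by apply: (par_not_back H Hsw Hp).
    have nb : forall u, e w u -> u = t.
      move=> u0 ewu; apply/eqP; apply/negPn/negP => ut.
      have : u0 \in nbrs e w :\: [set t] by rewrite in_setD in_set1 ut in_set.
      by rewrite t0 in_set0.
    apply: caseAD => //=.
    * by move: fw; rewrite /fresh; lia.
    * move=> x Hx Hpx; have xr : x != r by apply/eqP => E; move: Hpx; rewrite E (r2_par H).
      have [[q [qq eq _ _]] _ _] := r2_set H xr Hx.
      move: qq; rewrite Hpx => -[Eq]; rewrite -Eq e_sym in eq.
      by move: (nb x eq) Hpx => ->.
    * by move=> _ u0 /nb ->; rewrite /isset Ht.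
  + by case: Hnw.
  + case: Hig => [[Hd _]|[He _]]; last by case: Hnw.
    by case: Hw_init_idle; rewrite Hd.
- (* reply *)
  case: (eqVneq v w) => [Ev|] //; case: (eqVneq u t) => [Eu|]; last by rewrite andbF.
  move=> _; rewrite Ev Eu in hd *.
  inversion hd as [l0 Hi E1 E2 E3|l0 Hid Hp E1 E2 E3|l0 l1 s0 Hi Hp pr E1 E2 E3|
                   l0 l1 s0 He Hw pr E1 E2 E3|l0 Hig E1 E2 E3].
  + by move: Hi; rewrite Ht.
  + by case: Hid; rewrite Ht.
  + by move: Hi; rewrite Ht.
  + subst l' s.
    case: (eqVneq t r) => [Etr|tr].
      move: T Hb Hw He pr Ht Hwt; rewrite Etr => T Hb Hw He pr Ht' Hwt'.
      have Eph : ph (loc c r) = MainLoop by rewrite (r2_ph H).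
      have Ecn : cnt (loc c r) = K by rewrite (r2_K H).
      have Epr : par (loc c r) = None by rewrite (r2_par H).
      case: (eqVneq K (n - 1)) => [EK|NK].
        case: (proceed_main_n1 pr Eph (etrans Ecn EK)) => /=.
          move=> [w2 [w2n -> ->]]; right; right; left; exists K.
          by apply: (caseE H T) => //= _.
        move=> [t0 Ec Es']; right; right; right.
        by apply: (caseG _ H T) => //; rewrite Ec.
      have NK' : cnt (loc c r) <> n - 1 by rewrite Ecn; apply/eqP.
      case: (proceed_cases pr NK') => /=.
        move=> [w2 [w2n -> ->]]; right; right; left; exists K.
        by apply: (caseE H T) => //= _.
      move=> [t0 -> ->]; right; left.
      by rewrite Epr; apply: (caseF H T) => //=; apply/eqP.
    have [_ Hdn _ _] := r2_exp H He.
    have dt := Hdn tr.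
    have Ncnt : cnt (loc c t) <> n - 1.
      move: dt; rewrite /done => dt.
      case: (r2_Kn H) => HK; last by move: tr; rewrite (one_node t HK) eqxx.
      have := d_pos tr; lia.
    case: (proceed_cases pr Ncnt) => /=.
      move=> [w2 [w2n -> ->]]; right; right; left; exists K.
      apply: (caseE H T) => //= E; by move: tr; rewrite E eqxx.
    move=> [t0 -> ->]; right; right; left; exists K.
    have [p [pp _ _]] := r2_chain H tr He.
    by rewrite pp; apply: (caseH H T tr) => //=.
  + case: Hig => [[Hd _]|[_ Hw]]; first by move: Hd; rewrite Ht.
    by case: Hw.
Qed.

Lemma Inv_step c c' : Inv c -> step e r c c' -> Inv c'.
Proof.
case=> [H|[H|[[K H]|H]]].
- exact: R0_step H.
- exact: R1_step H.
- exact: R2_step H.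
- exact: R3_step H.
Qed.

Lemma Inv_reach c : reachable e r c -> Inv c.
Proof.
elim=> [|c0 c1 _ IH st01]; first by left; apply: R0_init.
exact: Inv_step IH st01.
Qed.

Lemma main_sec (k : nat) (c c' : config V) :
  1 <= k ->
  reachable e r c -> step e r c c' ->
  ~ root_finished r c k -> root_finished r c' k ->
  (forall v : V, dist_is e r v k ->
     st (loc c' v) <> INIT /\
     exists p : V, par (loc c' v) = Some p /\ e v p /\ dist_is e r p (k - 1)) /\
  (forall (v : V) (d0 : nat), dist_is e r v d0 -> k < d0 -> st (loc c' v) = INIT).
Proof.
move=> k1 Rc Sc _ [Hst Hk].
have := Inv_reach (reach_step Rc Sc).
case=> [[H _]|[H1|[[K H2]|H3]]].
- by move: Hst; rewrite H => -[].
- case: H1 => _ _ _ _ [Hiff Hs]; split.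
    move=> v /dist_d dv.
    have vr : v != r by apply/eqP => E; move: dv; rewrite E d_r; lia.
    have Hv : isset c' v by apply/Hiff; rewrite dv Hk.
    have [[p [pv ep dp _]] _ _] := Hs v vr Hv.
    split=> //; exists p; split=> //; split=> //; apply/dist_d; lia.
  move=> v d0 /dist_d dv kd; apply: notset => /Hiff; lia.
- by move: Hst; rewrite (r2_root H2) => -[].
- case: H3 => Hc _ Hset Hpar; split.
    move=> v /dist_d dv.
    have vr : v != r by apply/eqP => E; move: dv; rewrite E d_r; lia.
    have [p [pv ep dp _]] := Hpar v vr.
    split; first exact: Hset.
    exists p; split=> //; split=> //; apply/dist_d; lia.
  move=> v d0 /dist_d dv kd; exfalso; have := d_le v; lia.
Qed.

End Graph.

Unset Implicit Arguments.

Theorem mainTheorem6 (V : finType) (e : rel V) (r : V)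
    (e_sym : symmetric e) (e_irr : irreflexive e)
    (e_conn : forall u v : V, connect e u v)
    (k : nat) (c c' : config V) :
  1 <= k ->
  reachable e r c -> step e r c c' ->
  ~ root_finished r c k -> root_finished r c' k ->
  (forall v : V, dist_is e r v k ->
     st (loc c' v) <> INIT /\
     exists p : V, par (loc c' v) = Some p /\ e v p /\ dist_is e r p (k - 1)) /\
  (forall (v : V) (d : nat), dist_is e r v d -> k < d -> st (loc c' v) = INIT).
Proof. exact: main_sec. Qed.
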